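(* Let $d\ge1$, let $P$ be a complex polynomial of degree $d$ and $Z\subset D_1$. Then $$\sup_{D_1}|P|\le K_d(Z)\sup_Z|P|,\qquad K_d(Z)=\inf_{\alpha>0}\Big(\frac{6e^{1/\alpha}}{c_{d,\alpha}(Z)}\Big)^d$$ (with the convention that a term with $c_{d,\alpha}(Z)=0$ equals $+\infty$).
   Context: $D_r=\{z\in\mathbb C:|z|<r\}$. For $Z\subset D_1$, $d\in\mathbb N$ and $\alpha>0$, the $(d,\alpha)$-Cartan measure is $c_{d,\alpha}(Z)=\inf\{(\sum_{j=1}^q r_j^\alpha)^{1/\alpha}:\ Z\text{ is covered by } q\le d \text{ disks of radii } r_1,\dots,r_q>0\}$. *)

(* Defs.v *)
From Stdlib Require Import Reals List.
Open Scope R_scope.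

Definition Cx : Type := (R * R)%type.
Definition C0 : Cx := (0, 0).
Definition Cadd (z w : Cx) : Cx := (fst z + fst w, snd z + snd w).
Definition Csub (z w : Cx) : Cx := (fst z - fst w, snd z - snd w).
Definition Cmul (z w : Cx) : Cx :=
  (fst z * fst w - snd z * snd w, fst z * snd w + snd z * fst w).
Definition Cmod (z : Cx) : R := sqrt (fst z ^ 2 + snd z ^ 2).

(* Polynomial given by its coefficient list [a_0; a_1; ...; a_n] (lowest
   degree first); evaluation by Horner's scheme: a_0 + z (a_1 + z (...)). *)
Fixpoint peval (a : list Cx) (z : Cx) : Cx :=
  match a with
  | nil => C0
  | c :: l => Cadd c (Cmul z (peval l z))
  end.

Definition has_degree (a : list Cx) (d : nat) : Prop :=
  length a = S d /\ nth d a C0 <> C0.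

Definition in_disk (c : Cx) (r : R) (z : Cx) : Prop := Cmod (Csub z c) < r.

Definition cartan_value (d : nat) (alpha : R) (Z : Cx -> Prop) (v : R) : Prop :=
  exists disks : list (Cx * R),
    (length disks <= d)%nat /\
    Forall (fun p => 0 < snd p) disks /\
    (forall z, Z z -> exists p, In p disks /\ in_disk (fst p) (snd p) z) /\
    v = Rpower (fold_right (fun p s => Rpower (snd p) alpha + s) 0 disks) (1 / alpha).

Definition is_glb (E : R -> Prop) (m : R) : Prop :=
  (forall x, E x -> m <= x) /\ (forall b, (forall x, E x -> b <= x) -> b <= m).

Definition is_cartan_measure (d : nat) (alpha : R) (Z : Cx -> Prop) (c : R) : Prop :=
  is_glb (cartan_value d alpha Z) c.

(* Main.v *)
Require Import Defs.
From Stdlib Require Import Reals List.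
Open Scope R_scope.
From Stdlib Require Import Lra Lia Psatz Classical Arith.
From Coquelicot Require Complex.

Definition dist (u z : Cx) : R := Cmod (Csub u z).

Lemma dist_ge0 u z : 0 <= dist u z.
Proof. unfold dist, Cmod. apply sqrt_pos. Qed.

Lemma dist_sym u z : dist u z = dist z u.
Proof. unfold dist, Cmod, Csub; simpl. f_equal. ring. Qed.

Lemma dist_refl u : dist u u = 0.
Proof. unfold dist, Cmod, Csub; simpl. replace ((fst u - fst u) * ((fst u - fst u) * 1) + (snd u - snd u) * ((snd u - snd u) * 1)) with 0 by ring. apply sqrt_0. Qed.

Lemma dist_tri u v x : dist u x <= dist u v + dist v x.
Proof.
  unfold dist.
  assert (E : Csub u x = (fst (Csub u v) + fst (Csub v x), snd (Csub u v) + snd (Csub v x))).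
  { destruct u, v, x; unfold Csub; simpl; f_equal; ring. }
  rewrite E. exact (Complex.Cmod_triangle (Csub u v) (Csub v x)).
Qed.

Lemma Cmod_Cmul x y : Cmod (Cmul x y) = Cmod x * Cmod y.
Proof. exact (Complex.Cmod_mult x y). Qed.

Lemma Cmod_ge0 x : 0 <= Cmod x.
Proof. unfold Cmod. apply sqrt_pos. Qed.

Lemma Rpower_pos x y : 0 < Rpower x y.
Proof. unfold Rpower. apply exp_pos. Qed.

Lemma Rpower_1_base y : Rpower 1 y = 1.
Proof. unfold Rpower. rewrite ln_1, Rmult_0_r. apply exp_0. Qed.

Lemma Rpower_inv_pow x alpha : 0 < x -> 0 < alpha -> Rpower (Rpower x alpha) (1/alpha) = x.
Proof.
  intros Hx Ha. rewrite Rpower_mult. replace (alpha * (1/alpha)) with 1 by (field; lra).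
  apply Rpower_1; auto.
Qed.

Lemma Rpower_pow_inv x alpha : 0 < x -> 0 < alpha -> Rpower (Rpower x (1/alpha)) alpha = x.
Proof.
  intros Hx Ha. rewrite Rpower_mult. replace (1/alpha * alpha) with 1 by (field; lra).
  apply Rpower_1; auto.
Qed.

Lemma exp_pow_n x n : exp x ^ n = exp (INR n * x).
Proof.
  induction n.
  - simpl. rewrite Rmult_0_l, exp_0; auto.
  - rewrite S_INR. change (exp x ^ S n) with (exp x * exp x ^ n).
    rewrite IHn, <- exp_plus. f_equal. ring.
Qed.

Lemma fact_bound n : INR n ^ n <= INR (fact n) * exp (INR n).
Proof.
  induction n.
  - simpl. rewrite exp_0. lra.
  - destruct (Nat.eq_dec n 0) as [->|Hn].
    + change (INR 1) with 1. simpl. pose proof (exp_ineq1_le 1). lra.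
    + assert (Hnp : 0 < INR n) by (apply lt_0_INR; lia).
      assert (H1 : INR (S n) <= INR n * exp (1 / INR n)).
      { rewrite S_INR. pose proof (exp_ineq1_le (1/INR n)).
        apply Rmult_le_compat_l with (r := INR n) in H; [|lra].
        replace (INR n * (1 + 1/INR n)) with (INR n + 1) in H by (field; lra). lra. }
      assert (H2 : INR (S n) ^ n <= INR n ^ n * exp 1).
      { replace (exp 1) with (exp (1/INR n) ^ n).
        - rewrite <- Rpow_mult_distr. apply pow_incr. split; [apply pos_INR|auto].
        - rewrite exp_pow_n. f_equal. field. lra. }
      replace (INR (S n) ^ S n) with (INR (S n) * INR (S n) ^ n) by (simpl; ring).
      replace (INR (fact (S n)) * exp (INR (S n))) with (INR (S n) * (INR (fact n) * exp (INR n) * exp 1)).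
      2:{ rewrite fact_simpl, mult_INR, S_INR, exp_plus. ring. }
      apply Rmult_le_compat_l; [apply pos_INR|].
      apply Rle_trans with (INR n ^ n * exp 1); auto.
      apply Rmult_le_compat_r; [left; apply exp_pos|auto].
Qed.

Definition ob (w : Cx) (r : R) (z : Cx) : bool := if Rlt_dec (dist w z) r then true else false.
Definition cb (c : Cx) (l : R) (z : Cx) : bool := if Rle_dec (dist z c) l then true else false.
Definition cnt (P : Cx -> bool) (S : list Cx) : nat := length (filter P S).

Lemma cnt_mono (P Q : Cx -> bool) S :
  (forall z, In z S -> P z = true -> Q z = true) -> (cnt P S <= cnt Q S)%nat.
Proof.
  unfold cnt. induction S as [|x S IH]; simpl; intros H; [lia|].
  destruct (P x) eqn:Px.
  - rewrite (H x (or_introl eq_refl) Px). simpl.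
    assert (length (filter P S) <= length (filter Q S))%nat by (apply IH; auto). lia.
  - destruct (Q x); simpl; [assert (length (filter P S) <= length (filter Q S))%nat by (apply IH; auto); lia|].
    apply IH; auto.
Qed.

Lemma cnt_filter (P Q : Cx -> bool) S :
  (forall z, In z S -> P z = true -> Q z = true) -> cnt P S = cnt P (filter Q S).
Proof.
  unfold cnt. induction S as [|x S IH]; simpl; intros H; [auto|].
  destruct (P x) eqn:Px.
  - rewrite (H x (or_introl eq_refl) Px). simpl. rewrite Px. simpl. f_equal. apply IH; auto.
  - destruct (Q x); simpl; [rewrite Px|]; apply IH; auto.
Qed.

Lemma cnt_le_len P S : (cnt P S <= length S)%nat.
Proof. apply filter_length_le. Qed.

Lemma cnt_all P S : (forall z, In z S -> P z = true) -> cnt P S = length S.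
Proof.
  unfold cnt. induction S as [|x S IH]; simpl; intros H; auto.
  rewrite (H x (or_introl eq_refl)). simpl. f_equal. apply IH; auto.
Qed.

Lemma cnt_app_le P l1 x l2 : (cnt P (l1 ++ l2) <= cnt P (l1 ++ x :: l2))%nat.
Proof.
  unfold cnt. rewrite !filter_app, !app_length. simpl. destruct (P x); simpl; lia.
Qed.

Lemma ob_true w r z : ob w r z = true <-> dist w z < r.
Proof. unfold ob. destruct (Rlt_dec (dist w z) r); split; intros; auto; try discriminate; contradiction. Qed.

Lemma cb_true c l z : cb c l z = true <-> dist z c <= l.
Proof. unfold cb. destruct (Rle_dec (dist z c) l); split; intros; auto; try discriminate; contradiction. Qed.

Definition sumg (alpha : R) (L : list (Cx * R)) : R :=
  fold_right (fun p s => Rpower (snd p) alpha + s) 0 L.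

Definition lam (alpha H : R) (n p : nat) : R := H * Rpower (INR p / INR n) (1/alpha).

Definition bad (alpha H : R) (n : nat) (S : list Cx) (w : Cx) : Prop :=
  exists r, 0 < r /\ INR n * Rpower r alpha <= INR (cnt (ob w r) S) * Rpower H alpha.

Lemma lam_pos alpha H n p : 0 < H -> 0 < lam alpha H n p.
Proof. intros. unfold lam. apply Rmult_lt_0_compat; auto. apply Rpower_pos. Qed.

Lemma g_lam alpha H n p : 0 < alpha -> 0 < H -> (1 <= n)%nat -> (1 <= p)%nat ->
  Rpower (lam alpha H n p) alpha = Rpower H alpha * INR p / INR n.
Proof.
  intros Ha HH Hn Hp. unfold lam.
  assert (0 < INR p) by (apply lt_0_INR; lia).
  assert (0 < INR n) by (apply lt_0_INR; lia).
  rewrite <- Rpower_mult_distr; auto; [|apply Rpower_pos].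
  rewrite Rpower_pow_inv; auto. 2:{ apply Rdiv_lt_0_compat; auto. }
  unfold Rdiv. ring.
Qed.

Lemma max_sat (Q : nat -> Prop) m : Q 1%nat -> (1 <= m)%nat ->
  exists p, (1 <= p <= m)%nat /\ Q p /\ forall q, (p < q <= m)%nat -> ~ Q q.
Proof.
  intros H1. induction m as [|m IH]; intros Hm; [lia|].
  destruct (classic (Q (S m))) as [HQ|HQ].
  - exists (S m). split; [lia|]. split; auto. intros; lia.
  - destruct (Nat.eq_dec m 0) as [->|Hm0].
    + exfalso; auto.
    + destruct (IH ltac:(lia)) as [p [Hp1 [Hp2 Hp3]]].
      exists p. split; [lia|]. split; auto. intros q Hq.
      destruct (Nat.eq_dec q (S m)) as [->|Hq']; auto. apply Hp3; lia.
Qed.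

Lemma cartan alpha H n : 0 < alpha -> 0 < H -> (1 <= n)%nat ->
  forall m S, length S = m -> (m <= n)%nat ->
  exists L, (length L <= m)%nat /\ Forall (fun p => 0 < snd p) L /\
    sumg alpha L <= Rpower 2 alpha * Rpower H alpha * INR m / INR n /\
    forall w, bad alpha H n S w -> exists p, In p L /\ in_disk (fst p) (snd p) w.
Proof.
  intros Ha HH Hn m. induction m as [m IH] using (well_founded_induction lt_wf).
  intros S HS Hmn.
  assert (Hnpos : 0 < INR n) by (apply lt_0_INR; lia).
  assert (HgH : 0 < Rpower H alpha) by apply Rpower_pos.
  assert (Hg2 : 0 < Rpower 2 alpha) by apply Rpower_pos.
  assert (HK : 0 < Rpower 2 alpha * Rpower H alpha / INR n).
  { apply Rdiv_lt_0_compat; auto. apply Rmult_lt_0_compat; auto. }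
  destruct S as [|z0 S0].
  - simpl in HS. subst m. exists nil. split; [simpl; lia|]. split; [constructor|]. split.
    + simpl. unfold Rdiv. rewrite Rmult_0_r, Rmult_0_l. lra.
    + intros w [r [Hr Hb]]. unfold cnt in Hb; simpl in Hb.
      pose proof (Rpower_pos r alpha). nra.
  - set (S := z0 :: S0) in *.
    set (Q := fun p => exists c, (p <= cnt (cb c (lam alpha H n p)) S)%nat).
    assert (Q1 : Q 1%nat).
    { exists z0. unfold cnt, S. simpl.
      assert (E : cb z0 (lam alpha H n 1) z0 = true).
      { apply cb_true. rewrite dist_refl. left; apply lam_pos; auto. }
      rewrite E. simpl. lia. }
    assert (Hm1 : (1 <= m)%nat) by (rewrite <- HS; simpl; lia).
    destruct (max_sat Q m Q1 Hm1) as [p [Hp [[c Hc] Hmax]]].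
    set (lp := lam alpha H n p) in *.
    set (qD := cnt (cb c lp) S) in *.
    set (S' := filter (fun z => negb (cb c lp z)) S).
    assert (HqDm : (qD <= m)%nat) by (rewrite <- HS; apply cnt_le_len).
    assert (HS' : length S' = (m - qD)%nat).
    { pose proof (filter_length (cb c lp) S). unfold S', qD, cnt in *. lia. }
    destruct (IH (m - qD)%nat ltac:(lia) S' HS' ltac:(lia)) as [L' [HL1 [HL2 [HL3 HL4]]]].
    assert (Hlp : 0 < lp) by (apply lam_pos; auto).
    exists ((c, 2 * lp) :: L'). split; [simpl; lia|]. split.
    { constructor; auto. simpl. lra. }
    split.
    + simpl. rewrite <- Rpower_mult_distr by lra. unfold lp. rewrite g_lam by (auto; lia).
      rewrite minus_INR in HL3 by lia.
      assert (INR p <= INR qD) by (apply le_INR; lia).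
      apply Rle_trans with (Rpower 2 alpha * (Rpower H alpha * INR p / INR n) + Rpower 2 alpha * Rpower H alpha * (INR m - INR qD) / INR n); [lra|].
      set (K := Rpower 2 alpha * Rpower H alpha / INR n) in *.
      replace (Rpower 2 alpha * (Rpower H alpha * INR p / INR n) +
               Rpower 2 alpha * Rpower H alpha * (INR m - INR qD) / INR n)
        with (K * (INR p + (INR m - INR qD))) by (unfold K; field; lra).
      replace (Rpower 2 alpha * Rpower H alpha * INR m / INR n) with (K * INR m) by (unfold K; field; lra).
      apply Rmult_le_compat_l; lra.
    + intros w [r [Hr Hb]].
      destruct (Rlt_dec (dist w c) (2 * lp)) as [Hin|Hout].
      { exists (c, 2*lp). split; [left; auto|]. unfold in_disk. simpl. exact Hin. }
      destruct (Rle_dec r lp) as [Hrl|Hrl].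
      * assert (E : cnt (ob w r) S = cnt (ob w r) S').
        { apply cnt_filter. intros z _ Hz. apply ob_true in Hz.
          apply Bool.negb_true_iff. destruct (cb c lp z) eqn:E; auto. apply cb_true in E.
          pose proof (dist_tri w z c). lra. }
        destruct (HL4 w) as [q [Hq1 Hq2]]. { exists r. split; auto. rewrite <- E. auto. }
        exists q. split; [right|]; auto.
      * exfalso. set (qq := cnt (ob w r) S) in *.
        assert (Hgr : Rpower lp alpha < Rpower r alpha) by (apply Rlt_Rpower_l; lra).
        unfold lp in Hgr. rewrite g_lam in Hgr by (auto; lia).
        assert (Hpq : INR p < INR qq).
        { apply Rmult_lt_reg_r with (Rpower H alpha); auto.
          apply Rlt_le_trans with (INR n * Rpower r alpha); auto.
          apply Rmult_lt_reg_l with (/ INR n); [apply Rinv_0_lt_compat; auto|].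
          replace (/ INR n * (INR p * Rpower H alpha)) with (Rpower H alpha * INR p / INR n) by (field; lra).
          replace (/ INR n * (INR n * Rpower r alpha)) with (Rpower r alpha) by (field; lra). auto. }
        apply INR_lt in Hpq.
        assert (Hqm : (qq <= m)%nat) by (rewrite <- HS; apply cnt_le_len).
        apply (Hmax qq); [lia|].
        exists w. apply cnt_mono. intros z _ Hz. apply ob_true in Hz. apply cb_true.
        rewrite dist_sym.
        assert (Hrq : r <= lam alpha H n qq).
        { destruct (Rle_dec r (lam alpha H n qq)) as [|Hn']; auto. exfalso.
          assert (Hg : Rpower (lam alpha H n qq) alpha < Rpower r alpha).
          { apply Rlt_Rpower_l; auto; split; [apply lam_pos; auto|lra]. }
          rewrite g_lam in Hg by (auto; lia).
          apply Rmult_lt_compat_l with (r := INR n) in Hg; auto.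
          replace (INR n * (Rpower H alpha * INR qq / INR n)) with (INR qq * Rpower H alpha) in Hg by (field; lra).
          lra. }
        lra.
Qed.

Fixpoint lpr (alpha H : R) (n k : nat) : R :=
  match k with O => 1 | S k' => lpr alpha H n k' * (lam alpha H n k / 3) end.

Definition prodd (u : Cx) (S : list Cx) : R := fold_right (fun z acc => dist u z * acc) 1 S.

Definition good (alpha H : R) (n : nat) (S : list Cx) (w : Cx) : Prop :=
  forall r, 0 < r -> INR (cnt (ob w r) S) * Rpower H alpha < INR n * Rpower r alpha.

Lemma prodd_ge0 u S : 0 <= prodd u S.
Proof. induction S; simpl; [lra|]. apply Rmult_le_pos; auto. apply dist_ge0. Qed.

Lemma prodd_split u l1 x l2 : prodd u (l1 ++ x :: l2) = dist u x * prodd u (l1 ++ l2).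
Proof. induction l1; simpl; [auto|]. rewrite IHl1. ring. Qed.

Lemma lpr_ge0 alpha H n k : 0 < H -> 0 <= lpr alpha H n k.
Proof.
  intros HH. induction k; simpl; [lra|]. apply Rmult_le_pos; auto.
  pose proof (lam_pos alpha H n (S k) HH). lra.
Qed.

Lemma lam_le alpha H n p : 0 < alpha -> 0 < H -> (1 <= p)%nat -> (p <= n)%nat -> lam alpha H n p <= H.
Proof.
  intros Ha HH Hp Hpn. unfold lam.
  assert (0 < INR p) by (apply lt_0_INR; lia).
  assert (INR p <= INR n) by (apply le_INR; lia).
  assert (Rpower (INR p / INR n) (1/alpha) <= 1).
  { apply Rle_trans with (Rpower 1 (1/alpha)); [|rewrite Rpower_1_base; lra]. apply Rle_Rpower_l.
    - unfold Rdiv. left. apply Rmult_lt_0_compat; [lra|]. apply Rinv_0_lt_compat; lra.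
    - split; [apply Rdiv_lt_0_compat; lra|]. unfold Rdiv. apply Rmult_le_reg_r with (INR n); [lra|]. rewrite Rmult_assoc, Rinv_l, Rmult_1_r, Rmult_1_l; lra. }
  nra.
Qed.

Lemma exists_max (f : Cx -> R) (l : list Cx) : l <> nil ->
  exists x, In x l /\ forall y, In y l -> f y <= f x.
Proof.
  induction l as [|a l IH]; intros Hl; [congruence|].
  destruct l as [|b l'].
  - exists a. split; [left; auto|]. intros y [->|[]]. lra.
  - destruct (IH ltac:(discriminate)) as [x [Hx1 Hx2]].
    destruct (Rle_dec (f a) (f x)).
    + exists x. split; [right; auto|]. intros y [<-|Hy]; auto.
    + exists a. split; [left; auto|]. intros y [<-|Hy]; [lra|]. specialize (Hx2 y Hy). lra.
Qed.

Lemma prod_bound alpha H n z0 w : 0 < alpha -> 0 < H -> H <= 1 -> (1 <= n)%nat -> dist z0 w <= 2 ->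
  forall m S, length S = m -> (m <= n)%nat -> good alpha H n S w ->
  prodd z0 S * lpr alpha H n m <= prodd w S.
Proof.
  intros Ha HH H1 Hn Hzw m. induction m as [|k IH]; intros S HS Hmn Hg.
  - destruct S; simpl in HS; [|discriminate]. simpl. lra.
  - assert (Hne : S <> nil) by (intro E; subst S; simpl in HS; discriminate).
    destruct (exists_max (dist w) S Hne) as [x [Hx Hmx]].
    destruct (in_split x S Hx) as [l1 [l2 ->]].
    assert (HS' : length (l1 ++ l2) = k).
    { rewrite app_length in *. simpl in HS. lia. }
    assert (Hg' : good alpha H n (l1 ++ l2) w).
    { intros r Hr. specialize (Hg r Hr).
      assert (INR (cnt (ob w r) (l1 ++ l2)) <= INR (cnt (ob w r) (l1 ++ x :: l2))) by (apply le_INR, cnt_app_le).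
      pose proof (Rpower_pos H alpha). nra. }
    specialize (IH (l1 ++ l2) HS' ltac:(lia) Hg').
    set (lm := lam alpha H n (S k)).
    assert (Hlm0 : 0 < lm) by (apply lam_pos; auto).
    assert (Hlm1 : lm <= 1) by (pose proof (lam_le alpha H n (S k) Ha HH ltac:(lia) Hmn); unfold lm; lra).
    assert (Ht : lm <= dist w x).
    { destruct (Rle_dec lm (dist w x)) as [|Hlt]; auto. exfalso.
      specialize (Hg lm Hlm0).
      rewrite cnt_all in Hg.
      2:{ intros y Hy. apply ob_true. specialize (Hmx y Hy). lra. }
      rewrite HS in Hg. unfold lm in Hg. rewrite g_lam in Hg by (auto; lia).
      assert (0 < INR n) by (apply lt_0_INR; lia).
      replace (INR n * (Rpower H alpha * INR (S k) / INR n)) with (INR (S k) * Rpower H alpha) in Hg by (field; lra).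
      lra. }
    assert (Hs : dist z0 x <= 2 + dist w x) by (pose proof (dist_tri z0 w x); lra).
    rewrite !prodd_split. simpl lpr. fold lm.
    pose proof (prodd_ge0 z0 (l1 ++ l2)). pose proof (lpr_ge0 alpha H n k HH).
    pose proof (dist_ge0 z0 x).
    replace (dist z0 x * prodd z0 (l1 ++ l2) * (lpr alpha H n k * (lm / 3)))
      with ((dist z0 x * lm / 3) * (prodd z0 (l1 ++ l2) * lpr alpha H n k)) by (unfold Rdiv; ring).
    apply Rmult_le_compat; auto.
    + apply Rmult_le_pos; [|lra]. apply Rmult_le_pos; lra.
    + apply Rmult_le_pos; auto.
    + nra.
Qed.

Lemma lpr_formula alpha H n k : 0 < alpha -> 0 < H -> (1 <= n)%nat ->
  lpr alpha H n k = (H/3)^k * Rpower (INR (fact k) / INR n ^ k) (1/alpha).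
Proof.
  intros Ha HH Hn. assert (0 < INR n) by (apply lt_0_INR; lia).
  induction k.
  - simpl. replace (1/1) with 1 by field. rewrite Rpower_1_base. ring.
  - simpl lpr. rewrite IHk. unfold lam.
    assert (0 < INR (fact k) / INR n ^ k).
    { apply Rdiv_lt_0_compat; [apply INR_fact_lt_0|apply pow_lt; auto]. }
    assert (0 < INR (S k) / INR n) by (apply Rdiv_lt_0_compat; auto; apply lt_0_INR; lia).
    replace ((H / 3) ^ k * Rpower (INR (fact k) / INR n ^ k) (1 / alpha) *
      (H * Rpower (INR (S k) / INR n) (1 / alpha) / 3))
      with ((H/3)^(S k) * (Rpower (INR (fact k) / INR n ^ k) (1 / alpha) * Rpower (INR (S k) / INR n) (1 / alpha)))
      by (simpl; unfold Rdiv; ring).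
    rewrite Rpower_mult_distr by auto. f_equal. f_equal.
    rewrite fact_simpl, mult_INR. simpl pow. field. pose proof (pow_nonzero (INR n) k). repeat split; lra.
Qed.

Lemma lpr_lower alpha H n : 0 < alpha -> 0 < H -> (1 <= n)%nat ->
  (H/3 * exp (-(1/alpha)))^n <= lpr alpha H n n.
Proof.
  intros Ha HH Hn. assert (0 < INR n) by (apply lt_0_INR; lia).
  rewrite lpr_formula by auto. rewrite Rpow_mult_distr.
  apply Rmult_le_compat_l; [apply pow_le; lra|].
  rewrite exp_pow_n. unfold Rpower.
  assert (Hnn : 0 < INR n ^ n) by (apply pow_lt; auto).
  assert (Hf : exp (- INR n) <= INR (fact n) / INR n ^ n).
  { pose proof (fact_bound n). rewrite exp_Ropp.
    apply Rmult_le_reg_r with (INR n ^ n * exp (INR n)).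
    - apply Rmult_lt_0_compat; auto. apply exp_pos.
    - replace (/ exp (INR n) * (INR n ^ n * exp (INR n))) with (INR n ^ n) by (field; apply Rgt_not_eq, exp_pos).
      replace (INR (fact n) / INR n ^ n * (INR n ^ n * exp (INR n))) with (INR (fact n) * exp (INR n)) by (field; lra).
      auto. }
  assert (Hl : - INR n <= ln (INR (fact n) / INR n ^ n)).
  { rewrite <- (ln_exp (- INR n)). destruct Hf as [Hf|Hf]; [left; apply ln_increasing; auto; apply exp_pos|rewrite Hf; lra]. }
  assert (Hle : INR n * - (1/alpha) <= 1/alpha * ln (INR (fact n) / INR n ^ n)).
  { replace (INR n * - (1/alpha)) with (1/alpha * (- INR n)) by ring.
    apply Rmult_le_compat_l; auto. unfold Rdiv. rewrite Rmult_1_l. left. apply Rinv_0_lt_compat; auto. }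
  destruct Hle as [Hlt|Heq]; [left; apply exp_increasing; auto|rewrite Heq; lra].
Qed.

Lemma lpr_mono alpha H n m : 0 < alpha -> 0 < H -> H <= 1 -> (1 <= n)%nat ->
  forall k, (m <= k)%nat -> (k <= n)%nat -> lpr alpha H n k <= lpr alpha H n m.
Proof.
  intros Ha HH H1 Hn k. induction k as [|k IH]; intros Hmk Hkn.
  - assert (m = 0%nat) by lia. subst. lra.
  - destruct (Nat.eq_dec m (S k)) as [->|Hne]; [lra|].
    simpl lpr. pose proof (lpr_ge0 alpha H n k HH).
    pose proof (lam_pos alpha H n (S k) HH). pose proof (lam_le alpha H n (S k) Ha HH ltac:(lia) Hkn).
    specialize (IH ltac:(lia) ltac:(lia)). nra.
Qed.

Definition Cprod (z : Cx) (rts : list Cx) : Cx :=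
  fold_right (fun r acc => Cmul (Csub z r) acc) (1, 0) rts.

Lemma Cmod_Cprod z rts : Cmod (Cprod z rts) = prodd z rts.
Proof.
  induction rts; simpl.
  - unfold Cmod; simpl. replace (1 * (1 * 1) + 0 * (0 * 1)) with 1 by ring. apply sqrt_1.
  - rewrite Cmod_Cmul, IHrts. reflexivity.
Qed.

Lemma sumg_ge0 alpha L : 0 <= sumg alpha L.
Proof. induction L; simpl; [lra|]. pose proof (Rpower_pos (snd a) alpha). lra. Qed.

Lemma c_le_1 d alpha Z c : (1 <= d)%nat -> 0 < alpha -> (forall z, Z z -> Cmod z < 1) ->
  is_cartan_measure d alpha Z c -> c <= 1.
Proof.
  intros Hd Ha HZ [Hlb _]. apply Hlb. exists ((C0, 1) :: nil). split; [simpl; lia|].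
  split; [constructor; [simpl; lra|constructor]|]. split.
  - intros z Hz. exists (C0, 1). split; [left; auto|]. unfold in_disk; simpl.
    specialize (HZ z Hz). unfold Cmod, Csub, C0 in *; simpl in *. rewrite !Rminus_0_r. auto.
  - simpl. rewrite Rpower_1_base, Rplus_0_r, Rpower_1_base. auto.
Qed.

Lemma Z_nonempty d alpha Z c : (1 <= d)%nat -> 0 < alpha -> is_cartan_measure d alpha Z c -> 0 < c ->
  exists w, Z w.
Proof.
  intros Hd Ha [Hlb _] Hc. apply NNPP. intros Hne.
  assert (c <= c/2).
  { apply Hlb. exists ((C0, c/2) :: nil). split; [simpl; lia|].
    split; [constructor; [simpl; lra|constructor]|]. split.
    - intros z Hz. exfalso. apply Hne. exists z; auto.
    - simpl. rewrite Rplus_0_r, Rpower_inv_pow by lra. auto. }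
  lra.
Qed.

Lemma limit_arg X A d : 0 <= A -> (1 <= d)%nat -> (forall s, 1 < s -> X <= s^d * A) -> X <= A.
Proof.
  intros HA Hd Hs. apply Rnot_lt_le. intros HXA.
  destruct HA as [HA|HA].
  2:{ subst A. specialize (Hs 2 ltac:(lra)). rewrite Rmult_0_r in Hs. lra. }
  assert (Hq : 1 < X / A).
  { apply Rmult_lt_reg_r with A; auto. unfold Rdiv. rewrite Rmult_assoc, Rinv_l, Rmult_1_r; lra. }
  assert (Hl : 0 < ln (X / A)) by (rewrite <- ln_1; apply ln_increasing; lra).
  assert (Hdp : 0 < INR d) by (apply lt_0_INR; lia).
  set (e := ln (X / A) / (2 * INR d)).
  assert (He : 0 < e) by (unfold e; apply Rdiv_lt_0_compat; lra).
  specialize (Hs (1 + e) ltac:(lra)).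
  assert (Hp : (1 + e)^d <= exp (INR d * e)).
  { rewrite <- exp_pow_n. apply pow_incr. split; [lra|]. apply exp_ineq1_le. }
  assert (Hx : exp (INR d * e) < X / A).
  { replace (INR d * e) with (ln (X/A) / 2) by (unfold e; field; lra).
    rewrite <- (exp_ln (X/A)) at 2 by lra. apply exp_increasing. lra. }
  assert (X < X / A * A).
  { apply Rle_lt_trans with ((1+e)^d * A); auto. apply Rmult_lt_compat_r; lra. }
  unfold Rdiv in H. rewrite Rmult_assoc, Rinv_l, Rmult_1_r in H; lra.
Qed.

Lemma bound_h d a Z alpha c M z0 lc rts : (1 <= d)%nat -> (length rts <= d)%nat ->
  (forall z, peval a z = Cmul lc (Cprod z rts)) -> (forall z, Z z -> Cmod z < 1) ->
  0 < alpha -> is_cartan_measure d alpha Z c -> 0 < c ->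
  (forall w, Z w -> Cmod (peval a w) <= M) -> Cmod z0 < 1 ->
  forall h, 0 < h < c -> Cmod (peval a z0) <= (6 * exp (1/alpha) / h)^d * M.
Proof.
  intros Hd Hrts Hfac HZ Ha Hcart Hc HM Hz0 h Hh.
  pose proof (c_le_1 d alpha Z c Hd Ha HZ Hcart) as Hc1.
  set (H := h/2).
  assert (HH : 0 < H) by (unfold H; lra).
  assert (HH1 : H <= 1) by (unfold H; lra).
  destruct (Z_nonempty d alpha Z c Hd Ha Hcart Hc) as [w0 Hw0].
  set (m := length rts).
  assert (Hdpos : 0 < INR d) by (apply lt_0_INR; lia).
  assert (Hgood : exists w, Z w /\ good alpha H d rts w).
  { apply NNPP. intros Hno.
    assert (Hbad : forall w, Z w -> bad alpha H d rts w).
    { intros w Hw. destruct (classic (good alpha H d rts w)) as [Hg|Hg].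
      - exfalso. apply Hno. exists w. auto.
      - unfold good in Hg. apply not_all_ex_not in Hg. destruct Hg as [r Hr].
        apply imply_to_and in Hr. destruct Hr as [Hr1 Hr2]. apply Rnot_lt_le in Hr2.
        exists r. split; auto. }
    destruct (cartan alpha H d Ha HH Hd m rts eq_refl Hrts) as [L [HL1 [HL2 [HL3 HL4]]]].
    destruct (HL4 w0 (Hbad w0 Hw0)) as [p [Hp _]].
    assert (Hs0 : 0 < sumg alpha L).
    { destruct L as [|q L']; [inversion Hp|]. simpl. pose proof (Rpower_pos (snd q) alpha).
      pose proof (sumg_ge0 alpha L'). lra. }
    assert (Hcv : c <= Rpower (sumg alpha L) (1/alpha)).
    { destruct Hcart as [Hlb _]. apply Hlb. exists L. split; [lia|]. split; auto.
      all: try (intros z Hz; apply HL4; apply Hbad; auto). }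
    assert (Hsl : sumg alpha L <= Rpower h alpha).
    { apply Rle_trans with (Rpower 2 alpha * Rpower H alpha * INR m / INR d); auto.
      replace (Rpower h alpha) with (Rpower 2 alpha * Rpower H alpha).
      2:{ rewrite Rpower_mult_distr by lra. f_equal. unfold H. field. }
      assert (INR m <= INR d) by (apply le_INR; auto).
      pose proof (Rpower_pos 2 alpha). pose proof (Rpower_pos H alpha).
      assert (0 < Rpower 2 alpha * Rpower H alpha) by (apply Rmult_lt_0_compat; auto).
      apply Rmult_le_reg_r with (INR d); auto. unfold Rdiv.
      rewrite Rmult_assoc, Rinv_l, Rmult_1_r by lra. nra. }
    assert (Rpower (sumg alpha L) (1/alpha) <= h).
    { rewrite <- (Rpower_inv_pow h alpha) by lra. apply Rle_Rpower_l.
      - unfold Rdiv. rewrite Rmult_1_l. left. apply Rinv_0_lt_compat; auto.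
      - split; auto. }
    lra. }
  destruct Hgood as [w [Hw Hg]].
  assert (Hzw : dist z0 w <= 2).
  { pose proof (dist_tri z0 C0 w).
    assert (dist z0 C0 = Cmod z0).
    { unfold dist, Cmod, Csub, C0; simpl. rewrite !Rminus_0_r. auto. }
    assert (dist C0 w = Cmod w).
    { rewrite dist_sym. unfold dist, Cmod, Csub, C0; simpl. rewrite !Rminus_0_r. auto. }
    specialize (HZ w Hw). lra. }
  pose proof (prod_bound alpha H d z0 w Ha HH HH1 Hd Hzw m rts eq_refl Hrts Hg) as Hpb.
  pose proof (lpr_mono alpha H d m Ha HH HH1 Hd d Hrts (Nat.le_refl d)) as Hmono.
  pose proof (lpr_lower alpha H d Ha HH Hd) as Hlow.
  set (E := (H / 3 * exp (- (1 / alpha))) ^ d) in *.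
  set (X := Cmod (peval a z0)).
  assert (HX : X = Cmod lc * prodd z0 rts) by (unfold X; rewrite Hfac, Cmod_Cmul, Cmod_Cprod; auto).
  assert (HXE : X * E <= M).
  { pose proof (Cmod_ge0 lc). pose proof (prodd_ge0 z0 rts). pose proof (prodd_ge0 w rts).
    pose proof (lpr_ge0 alpha H d m HH).
    assert (0 <= E) by (unfold E; apply pow_le; pose proof (exp_pos (-(1/alpha))); nra).
    apply Rle_trans with (Cmod (peval a w)); [|apply HM; auto].
    rewrite Hfac, Cmod_Cmul, Cmod_Cprod, HX.
    apply Rle_trans with (Cmod lc * (prodd z0 rts * lpr alpha H d m)).
    - rewrite Rmult_assoc. apply Rmult_le_compat_l; auto. apply Rmult_le_compat_l; auto. lra.
    - apply Rmult_le_compat_l; auto. }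
  assert (HKE : (6 * exp (1 / alpha) / h)^d * E = 1).
  { unfold E. rewrite <- Rpow_mult_distr.
    replace (6 * exp (1 / alpha) / h * (H / 3 * exp (- (1 / alpha)))) with (exp (1/alpha) * exp (-(1/alpha))).
    - rewrite <- exp_plus, Rplus_opp_r, exp_0. apply pow1.
    - unfold H. field. lra. }
  assert (HXn : 0 <= X) by apply Cmod_ge0.
  assert (0 <= (6 * exp (1 / alpha) / h)^d).
  { apply pow_le. pose proof (exp_pos (1/alpha)). apply Rlt_le, Rdiv_lt_0_compat; lra. }
  replace X with (X * E * (6 * exp (1 / alpha) / h)^d) by (rewrite Rmult_assoc, (Rmult_comm E), HKE; ring).
  rewrite (Rmult_comm _ M). apply Rmult_le_compat_r; auto.
Qed.

From mathcomp Require ssreflect ssrfun ssrbool eqtype ssrnat seq bigop ssralg ssrnum poly.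
From mathcomp Require complex Rstruct.

Module FTA.
Import ssreflect ssrfun ssrbool eqtype ssrnat seq bigop ssralg ssrnum poly complex Rstruct.
Import GRing.Theory.
Local Open Scope ring_scope.

Definition toC (p : Cx) : R[i] := Complex (fst p) (snd p).
Definition ofC (c : R[i]) : Cx := (Re c, Im c).
Lemma ofCK c : toC (ofC c) = c. Proof. by case: c. Qed.
Lemma toCK p : ofC (toC p) = p. Proof. by case: p. Qed.
Lemma toC_add p q : toC (Cadd p q) = toC p + toC q. Proof. by case: p; case: q. Qed.
Lemma toC_mul p q : toC (Cmul p q) = toC p * toC q. Proof. by case: p; case: q. Qed.
Lemma toC_sub p q : toC (Csub p q) = toC p - toC q. Proof. by case: p; case: q. Qed.
Lemma toC_0 : toC C0 = 0. Proof. by []. Qed.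
Lemma toC_1 : toC (1%R, 0%R) = 1. Proof. by []. Qed.

Lemma peval_horner a z : toC (peval a z) = (Poly (map toC a)).[toC z].
Proof.
elim: a => [|c l IH] /=; first by rewrite horner0.
by rewrite horner_cons toC_add toC_mul IH addrC mulrC.
Qed.

Lemma Cprod_toC z rts : toC (Cprod z rts) = \prod_(r <- map toC rts) (toC z - r).
Proof.
elim: rts => [|r l IH] /=; first by rewrite big_nil.
by rewrite big_cons toC_mul IH toC_sub.
Qed.

Lemma size_len T (s : seq T) : size s = List.length s.
Proof. by elim: s => //= x l ->. Qed.

Lemma factor (a : list Cx) : exists (lc : Cx) (rts : list Cx),
  (List.length rts <= Nat.pred (List.length a))%coq_nat /\ forall z, peval a z = Cmul lc (Cprod z rts).
Proof.
set p := Poly (map toC a).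
have [p0|pn0] := eqVneq p 0.
  exists C0, nil; split; first by apply/leP.
  move=> z; rewrite -[peval a z]toCK peval_horner -/p p0 horner0.
  by rewrite -[Cmul _ _]toCK toC_mul toC_0 mul0r.
have [r Hr] := closed_field_poly_normal p.
exists (ofC (lead_coef p)), (map ofC r); split.
  apply/leP.
  have : size p = (size r).+1.
    by rewrite {1}Hr size_scale ?lead_coef_eq0 // size_prod_XsubC.
  move=> Hs; have := size_Poly (map toC a); rewrite -/p Hs size_map.
  move=> H; rewrite -!size_len size_map; case: a H {p pn0 Hr Hs} => //=.
move=> z; apply: (can_inj toCK).
rewrite toC_mul Cprod_toC peval_horner -/p ofCK {1}Hr.
rewrite hornerZ horner_prod; congr (_ * _).
rewrite -map_comp.
have -> : map (toC \o ofC) r = r by rewrite (eq_map ofCK) map_id.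
by apply: eq_bigr => x _; rewrite hornerXsubC.
Qed.
End FTA.

Set Bullet Behavior "Strict Subproofs".

Theorem mainTheorem7 :
  forall (d : nat) (a : list Cx) (Z : Cx -> Prop),
    (1 <= d)%nat ->
    has_degree a d ->
    (forall z, Z z -> Cmod z < 1) ->
    forall (alpha c : R), 0 < alpha ->
      is_cartan_measure d alpha Z c -> 0 < c ->
      forall M : R, (forall w, Z w -> Cmod (peval a w) <= M) ->
      forall z : Cx, Cmod z < 1 ->
        Cmod (peval a z) <= (6 * exp (1 / alpha) / c) ^ d * M.
Proof.
  intros d a Z Hd Hdeg HZ alpha c Ha Hcart Hc M HM z Hz.
  destruct (FTA.factor a) as [lc [rts [Hlen Hfac]]].
  destruct Hdeg as [Hla _]. rewrite Hla in Hlen. simpl in Hlen.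
  destruct (Z_nonempty d alpha Z c Hd Ha Hcart Hc) as [w0 Hw0].
  assert (HM0 : 0 <= M) by (apply Rle_trans with (Cmod (peval a w0)); [apply Cmod_ge0|apply HM; auto]).
  assert (HK : 0 < 6 * exp (1 / alpha)) by (pose proof (exp_pos (1/alpha)); lra).
  apply (limit_arg _ _ d).
  - apply Rmult_le_pos; auto. apply pow_le. apply Rlt_le, Rdiv_lt_0_compat; auto.
  - exact Hd.
  - intros s Hs.
    assert (Hh : 0 < c / s < c).
    { split; [apply Rdiv_lt_0_compat; lra|].
      apply Rmult_lt_reg_r with s; [lra|]. unfold Rdiv. rewrite Rmult_assoc, Rinv_l, Rmult_1_r by lra. nra. }
    pose proof (bound_h d a Z alpha c M z lc rts Hd Hlen Hfac HZ Ha Hcart Hc HM Hz (c/s) Hh) as Hb.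
    replace ((6 * exp (1 / alpha) / (c / s)) ^ d * M) with (s ^ d * ((6 * exp (1 / alpha) / c) ^ d * M)) in Hb; auto.
    rewrite <- Rmult_assoc, <- Rpow_mult_distr. f_equal. f_equal. field. lra.
Qed.
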